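(* $\mathrm{Log}_{>1}(\mathbb{Q})\subsetneq \mathrm{Log}_{>1}(\mathbb{R})$; that is, $\mathrm{Log}_{>1}(\mathbb{Q})$ is strictly contained in $\mathrm{Log}_{>1}(\mathbb{R})$.
   Context: Modal formulas are built from a countable set of propositional variables using $\bot$, $\to$ and one unary modality $\lozenge$. A frame is a pair $(X,R)$; a valuation assigns subsets of $X$ to variables; $x\models\lozenge\varphi$ iff there is $y$ with $xRy$ and $y\models\varphi$. A formula is valid in a frame if true at every point under every valuation. For a metric space $(X,d)$, $\mathrm{Log}_{>1}(X)$ is the set of modal formulas valid in the frame $(X,R_{>1})$, where $xR_{>1}y$ iff $d(x,y)>1$. $\mathbb{R}$ and $\mathbb{Q}$ carry the metric $d(x,y)=|x-y|$. *)

(* Defs.v *)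
From Stdlib Require Import Reals.
Open Scope R_scope.

Inductive form : Type :=
  | Var : nat -> form
  | Bot : form
  | Imp : form -> form -> form
  | Dia : form -> form.

Fixpoint sat {X : Type} (Rel : X -> X -> Prop) (V : nat -> X -> Prop)
  (x : X) (phi : form) : Prop :=
  match phi with
  | Var n => V n x
  | Bot => False
  | Imp a b => sat Rel V x a -> sat Rel V x b
  | Dia a => exists y, Rel x y /\ sat Rel V y a
  end.

Definition valid_in_frame {X : Type} (Rel : X -> X -> Prop) (phi : form) : Prop :=
  forall (V : nat -> X -> Prop) (x : X), sat Rel V x phi.

Definition R_gt1 {X : Type} (d : X -> X -> R) (x y : X) : Prop := d x y > 1.

Definition Log_gt1 {X : Type} (d : X -> X -> R) : form -> Prop :=
  fun phi => valid_in_frame (R_gt1 d) phi.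

Definition dist_R (x y : R) : R := Rabs (x - y).

(* The rationals, realised canonically as the subset of rational reals
   (each rational number is exactly one point), with the induced metric. *)
Definition is_rational (x : R) : Prop :=
  exists (p q : Z), q <> 0%Z /\ x = IZR p / IZR q.
Definition QR : Type := { x : R | is_rational x }.
Definition dist_Q (x y : QR) : R := Rabs (proj1_sig x - proj1_sig y).

(* Main.v *)
Require Import Defs.
From Stdlib Require Import Reals Lra Lia ZArith List Classical ClassicalEpsilon.
From Stdlib Require Cantor.
Open Scope R_scope.

Lemma rat_IZR (n : Z) : is_rational (IZR n).
Proof. exists n, 1%Z. split; [lia|]. unfold Rdiv. rewrite Rinv_1. ring. Qed.

Lemma rat_add x y : is_rational x -> is_rational y -> is_rational (x + y).
Proof.
  intros [p [q [Hq ->]]] [p' [q' [Hq' ->]]].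
  exists (p*q' + p'*q)%Z, (q*q')%Z. split; [lia|].
  rewrite plus_IZR, !mult_IZR.
  assert (IZR q <> 0) by (apply not_0_IZR; auto).
  assert (IZR q' <> 0) by (apply not_0_IZR; auto).
  field; auto.
Qed.

Lemma rat_opp x : is_rational x -> is_rational (- x).
Proof.
  intros [p [q [Hq ->]]]. exists (-p)%Z, q. split; auto.
  rewrite opp_IZR. unfold Rdiv. ring.
Qed.

Lemma rat_sub x y : is_rational x -> is_rational y -> is_rational (x - y).
Proof. intros. unfold Rminus. apply rat_add; auto. apply rat_opp; auto. Qed.

Lemma rat_dense a b : a < b -> exists q, is_rational q /\ a < q < b.
Proof.
  intros Hab.
  set (n := up (/ (b - a))).
  destruct (archimed (/ (b - a))) as [Hn1 _].
  assert (Hpos : 0 < / (b - a)) by (apply Rinv_0_lt_compat; lra).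
  assert (HnR : 0 < IZR n) by (unfold n; lra).
  set (k := up (a * IZR n)).
  destruct (archimed (a * IZR n)) as [Hk1 Hk2].
  exists (IZR k / IZR n). split.
  - exists k, n. split; auto. intro E. rewrite E in HnR. lra.
  - split.
    + apply (Rmult_lt_reg_r (IZR n)); auto. unfold Rdiv. rewrite Rmult_assoc, Rinv_l by lra. fold k in Hk1. lra.
    + apply (Rmult_lt_reg_r (IZR n)); auto. unfold Rdiv. rewrite Rmult_assoc, Rinv_l by lra. fold k in Hk2.
      assert (1 < (b - a) * IZR n).
      { apply (Rmult_lt_reg_l (/ (b - a))); auto.
        rewrite <- Rmult_assoc, Rinv_l by lra. fold n in Hn1. lra. }
      lra.
Qed.

Lemma no_sqrt2_Z : forall n p q, (Z.abs_nat q < n)%nat -> q <> 0%Z -> (p*p <> 2*q*q)%Z.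
Proof.
  induction n; intros p q Hn Hq E; [lia|].
  destruct (Z.Even_or_Odd p) as [[k Hk]|[k Hk]]; subst p.
  - assert (E2 : (q*q = 2*k*k)%Z) by lia.
    destruct (Z.Even_or_Odd q) as [[m Hm]|[m Hm]]; subst q.
    + apply (IHn k m); try lia.
    + lia.
  - lia.
Qed.

Lemma sqrt2_irr : ~ is_rational (sqrt 2).
Proof.
  intros [p [q [Hq E]]].
  assert (Hq' : IZR q <> 0) by (apply not_0_IZR; auto).
  assert (E2 : IZR p * IZR p = 2 * IZR q * IZR q).
  { assert (IZR p = sqrt 2 * IZR q) by (rewrite E; field; auto).
    rewrite H. replace (sqrt 2 * IZR q * (sqrt 2 * IZR q)) with (sqrt 2 * sqrt 2 * IZR q * IZR q) by ring.
    rewrite sqrt_sqrt by lra. ring. }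
  rewrite <- !mult_IZR in E2. apply eq_IZR in E2.
  apply (no_sqrt2_Z (S (Z.abs_nat q)) p q); auto.
Qed.
Definition Neg a := Imp a Bot.
Definition Box a := Neg (Dia (Neg a)).
Definition Uf a := Box (Box a).
Definition Ef a := Dia (Dia a).
Definition And a b := Neg (Imp a (Neg b)).



Lemma sat_Box {X} (Rel : X -> X -> Prop) V x a :
  sat Rel V x (Box a) <-> forall y, Rel x y -> sat Rel V y a.
Proof.
  simpl. split.
  - intros H y Hy. apply NNPP. intro Hn. apply H. exists y. auto.
  - intros H [y [Hy Hn]]. apply Hn, H, Hy.
Qed.

Lemma sat_And {X} (Rel : X -> X -> Prop) V x a b :
  sat Rel V x (And a b) <-> sat Rel V x a /\ sat Rel V x b.
Proof.
  simpl. split.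
  - intros H. split; apply NNPP; intro Hn; apply H; intros Ha Hb; auto.
  - intros [Ha Hb] H. apply H; auto.
Qed.

Definition joint {X} (Rel : X -> X -> Prop) := forall x y, exists z, Rel x z /\ Rel z y.

Lemma sat_Uf {X} (Rel : X -> X -> Prop) V x a : joint Rel ->
  sat Rel V x (Uf a) -> forall y, sat Rel V y a.
Proof.
  intros J H y. destruct (J x y) as [z [H1 H2]].
  unfold Uf in H. rewrite sat_Box in H. specialize (H z H1).
  rewrite sat_Box in H. apply H; auto.
Qed.

Lemma sat_Uf_intro {X} (Rel : X -> X -> Prop) V x a :
  (forall y, sat Rel V y a) -> sat Rel V x (Uf a).
Proof.
  intros H. unfold Uf. rewrite sat_Box. intros z _. rewrite sat_Box. auto.
Qed.

Lemma sat_Ef {X} (Rel : X -> X -> Prop) V x a :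
  sat Rel V x (Ef a) -> exists y, sat Rel V y a.
Proof. simpl. intros [z [_ [y [_ H]]]]. eauto. Qed.

Lemma sat_Ef_intro {X} (Rel : X -> X -> Prop) V x a : joint Rel ->
  (exists y, sat Rel V y a) -> sat Rel V x (Ef a).
Proof.
  intros J [y Hy]. destruct (J x y) as [z [H1 H2]]. simpl. exists z. split; auto. exists y; auto.
Qed.

Definition HLdef (Lp : R -> Prop) := forall y, Lp y <-> (forall z, Rabs (y - z) > 1 -> ~ Lp z).

Lemma conv (Lp : R -> Prop) : HLdef Lp -> forall u w t, Lp u -> Lp w -> u <= t <= w -> Lp t.
Proof.
  intros H u w t Hu Hw Ht. apply H. intros z Hz Lz.
  destruct (Rle_or_lt z t).
  - apply (proj1 (H w) Hw z); auto. unfold Rabs in *. destruct (Rcase_abs (t - z)), (Rcase_abs (w - z)); lra.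
  - apply (proj1 (H u) Hu z); auto. unfold Rabs in *. destruct (Rcase_abs (t - z)), (Rcase_abs (u - z)); lra.
Qed.

Lemma close (Lp : R -> Prop) : HLdef Lp -> forall u w, Lp u -> Lp w -> Rabs (u - w) <= 1.
Proof.
  intros H u w Hu Hw. destruct (Rle_or_lt (Rabs (u - w)) 1); auto.
  exfalso. apply (proj1 (H u) Hu w); auto.
Qed.

Lemma R_contra (L Rr M : R -> Prop) x1 y1 :
  HLdef L -> HLdef Rr -> HLdef M -> (forall y, ~ (L y /\ Rr y)) ->
  (forall y, M y -> L y \/ Rr y) -> M x1 -> L x1 -> M y1 -> Rr y1 -> x1 < y1 -> False.
Proof.
  intros HL HR HM D C Mx Lx My Ry Hxy.
  assert (Hb : bound L).
  { exists (x1 + 1). intros z Lz. pose proof (close L HL x1 z Lx Lz).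
    unfold Rabs in *. destruct (Rcase_abs (x1 - z)); lra. }
  destruct (completeness L Hb (ex_intro _ x1 Lx)) as [s [Hs1 Hs2]].
  assert (Ls : L s).
  { apply HL. intros z Hz Lz.
    assert (z <= s) by (apply Hs1; auto).
    assert (s <= z + 1).
    { apply Hs2. intros w Lw. pose proof (close L HL z w Lz Lw).
      unfold Rabs in *. destruct (Rcase_abs (z - w)); lra. }
    unfold Rabs in Hz. destruct (Rcase_abs (s - z)); lra. }
  assert (Hxs : x1 <= s) by (apply Hs1; auto).
  destruct (Rle_or_lt y1 s) as [Hys|Hys].
  - apply (D y1). split; auto. apply (conv L HL x1 s y1); auto; lra.
  - assert (Rs : Rr s).
    { apply HR. intros z Hz Rz.
      set (d := Rmin (y1 - s) (Rabs (s - z) - 1)).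
      assert (Hd : 0 < d) by (unfold d; apply Rmin_glb_lt; lra).
      assert (Hd1 : d <= y1 - s) by (unfold d; apply Rmin_l).
      assert (Hd2 : d <= Rabs (s - z) - 1) by (unfold d; apply Rmin_r).
      set (t := s + d / 2).
      assert (Mt : M t) by (apply (conv M HM x1 y1 t); auto; unfold t; lra).
      assert (Rt : Rr t).
      { destruct (C t Mt) as [Lt|]; auto. exfalso.
        assert (t <= s) by (apply Hs1; auto). unfold t in *; lra. }
      apply (proj1 (HR t) Rt z); auto.
      unfold t. unfold Rabs in *. destruct (Rcase_abs (s + d/2 - z)), (Rcase_abs (s - z)); lra. }
    apply (D s); auto.
Qed.

Definition lv := Var 0. Definition rv := Var 1. Definition mv := Var 2.
Definition phi2 :=
  Imp (Uf (Imp lv (Box (Neg lv)))) (Imp (Uf (Imp (Box (Neg lv)) lv))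
  (Imp (Uf (Imp rv (Box (Neg rv)))) (Imp (Uf (Imp (Box (Neg rv)) rv))
  (Imp (Uf (Imp mv (Box (Neg mv)))) (Imp (Uf (Imp (Box (Neg mv)) mv))
  (Imp (Uf (Neg (And lv rv))) (Imp (Uf (Imp mv (Imp (Neg lv) rv)))
  (Imp (Ef (And mv lv)) (Imp (Ef (And mv rv)) Bot))))))))).

Lemma joint_R : joint (R_gt1 dist_R).
Proof.
  intros x y. exists (Rabs x + Rabs y + 2). unfold R_gt1, dist_R.
  unfold Rabs; destruct (Rcase_abs x), (Rcase_abs y);
  repeat match goal with |- context [Rcase_abs ?e] => destruct (Rcase_abs e) end; split; lra.
Qed.

Lemma HL_from {X} (Rel : X -> X -> Prop) V k :
  (forall y, sat Rel V y (Imp (Var k) (Box (Neg (Var k))))) ->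
  (forall y, sat Rel V y (Imp (Box (Neg (Var k))) (Var k))) ->
  forall y, V k y <-> (forall z, Rel y z -> ~ V k z).
Proof.
  intros H1 H2 y. specialize (H1 y). specialize (H2 y). cbn [sat] in H1, H2.
  rewrite sat_Box in H1, H2. cbn [sat Neg] in H1, H2. split.
  - intros Hy z Hz Vz. exact (H1 Hy z Hz Vz).
  - intros H. apply H2. intros z Hz Vz. exact (H z Hz Vz).
Qed.

Lemma phi2_R : Log_gt1 dist_R phi2.
Proof.
  intros V x. unfold phi2. cbn [sat].
  intros U1 U2 U3 U4 U5 U6 U7 U8 E1 E2.
  pose proof (sat_Uf _ _ _ _ joint_R U1) as A1.
  pose proof (sat_Uf _ _ _ _ joint_R U2) as A2.
  pose proof (sat_Uf _ _ _ _ joint_R U3) as A3.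
  pose proof (sat_Uf _ _ _ _ joint_R U4) as A4.
  pose proof (sat_Uf _ _ _ _ joint_R U5) as A5.
  pose proof (sat_Uf _ _ _ _ joint_R U6) as A6.
  pose proof (sat_Uf _ _ _ _ joint_R U7) as A7.
  pose proof (sat_Uf _ _ _ _ joint_R U8) as A8.
  pose proof (HL_from _ _ 0 A1 A2) as HL.
  pose proof (HL_from _ _ 1 A3 A4) as HR.
  pose proof (HL_from _ _ 2 A5 A6) as HM.
  apply sat_Ef in E1. apply sat_Ef in E2.
  destruct E1 as [x1 E1]. destruct E2 as [y1 E2].
  rewrite sat_And in E1, E2. cbn [sat] in E1, E2.
  unfold R_gt1, dist_R in HL, HR, HM.
  assert (D : forall y, ~ (V 0%nat y /\ V 1%nat y)).
  { intros y [Ly Ry]. specialize (A7 y). cbn [sat Neg] in A7. apply A7. apply sat_And. split; [exact Ly|exact Ry]. }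
  assert (C : forall y, V 2%nat y -> V 0%nat y \/ V 1%nat y).
  { intros y My. specialize (A8 y). cbn [sat Neg] in A8. destruct (classic (V 0%nat y)) as [H0|H0]; [left; exact H0|right; exact (A8 My H0)]. }
  destruct E1 as [Mx Lx], E2 as [My Ry].
  destruct (Rtotal_order x1 y1) as [Hl|[He|Hg]].
  - apply (R_contra (V 0%nat) (V 1%nat) (V 2%nat) x1 y1); auto; intro; apply HL || apply HR || apply HM.
  - subst. apply (D y1); auto.
  - apply (R_contra (V 1%nat) (V 0%nat) (V 2%nat) y1 x1);
      [exact HR|exact HL|exact HM|intros y [A B]; apply (D y); auto
      |intros y Hy; destruct (C y Hy); auto|exact My|exact Ry|exact Mx|exact Lx|lra].
Qed.

Lemma joint_Q : joint (R_gt1 dist_Q).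
Proof.
  intros [x Hx] [y Hy].
  set (k := (up (Rabs x + Rabs y) + 2)%Z).
  destruct (archimed (Rabs x + Rabs y)) as [H1 _].
  assert (Hk : IZR k = IZR (up (Rabs x + Rabs y)) + 2) by (unfold k; rewrite plus_IZR; reflexivity).
  exists (exist _ (IZR k) (rat_IZR k)). unfold R_gt1, dist_Q; simpl.
  rewrite Hk. revert H1. generalize (IZR (up (Rabs x + Rabs y))). intros u H1.
  unfold Rabs in *; destruct (Rcase_abs x), (Rcase_abs y);
  repeat match goal with |- context [Rcase_abs ?e] => destruct (Rcase_abs e) end; split; lra.
Qed.

Definition aa := sqrt 2.

Lemma irr_shift c (k : Z) : ~ is_rational c -> ~ is_rational (c + IZR k / 2).
Proof.
  intros Hc Hr. apply Hc.
  replace c with ((c + IZR k / 2) - IZR k / 2) by ring.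
  apply rat_sub; auto. exists k, 2%Z. split; [lia|reflexivity].
Qed.

Lemma HL_Q c : ~ is_rational c -> ~ is_rational (c + 1) ->
  forall q : QR, (c < proj1_sig q < c + 1) <->
    (forall z : QR, Rabs (proj1_sig q - proj1_sig z) > 1 -> ~ (c < proj1_sig z < c + 1)).
Proof.
  intros H0 H1 [q Hq]; simpl. split.
  - intros Hin [z Hz] Hd Hzin; simpl in *.
    unfold Rabs in Hd; destruct (Rcase_abs (q - z)); lra.
  - intros H. apply NNPP. intro Hn.
    assert (q <> c) by (intro E; subst; auto).
    assert (q <> c + 1) by (intro E; subst; auto).
    destruct (Rlt_or_le q c).
    + destruct (rat_dense (Rmax c (q + 1)) (c + 1)) as [t [Ht1 Ht2]].
      { apply Rmax_lub_lt; lra. }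
      apply (H (exist _ t Ht1)); simpl.
      * pose proof (Rmax_r c (q+1)). unfold Rabs; destruct (Rcase_abs (q - t)); lra.
      * pose proof (Rmax_l c (q+1)). lra.
    + assert (q > c + 1) by lra.
      destruct (rat_dense c (Rmin (c + 1) (q - 1))) as [t [Ht1 Ht2]].
      { apply Rmin_glb_lt; lra. }
      apply (H (exist _ t Ht1)); simpl.
      * pose proof (Rmin_r (c+1) (q-1)). unfold Rabs; destruct (Rcase_abs (q - t)); lra.
      * pose proof (Rmin_l (c+1) (q-1)). lra.
Qed.

Definition VQ (k : nat) (q : QR) : Prop :=
  let x := proj1_sig q in
  match k with
  | 0%nat => aa < x < aa + 1
  | 1%nat => aa + 1 < x < aa + 2
  | 2%nat => aa + 1/2 < x < aa + 3/2
  | _ => False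
  end.

Lemma irr_k (k : Z) : ~ is_rational (aa + IZR k / 2).
Proof. apply irr_shift. apply sqrt2_irr. Qed.

Lemma HLsat (k : nat) c : ~ is_rational c -> ~ is_rational (c + 1) ->
  (forall q, VQ k q <-> c < proj1_sig q < c + 1) ->
  (forall y, sat (R_gt1 dist_Q) VQ y (Imp (Var k) (Box (Neg (Var k))))) /\
  (forall y, sat (R_gt1 dist_Q) VQ y (Imp (Box (Neg (Var k))) (Var k))).
Proof.
  intros H0 H1 E. split; intros y; cbn [sat]; rewrite sat_Box; cbn [sat Neg];
  unfold R_gt1, dist_Q.
  - intros Hy z Hz Vz. rewrite E in Hy, Vz. apply (proj1 (HL_Q c H0 H1 y) Hy z); auto.
  - intros H. rewrite E. apply (proj2 (HL_Q c H0 H1 y)). intros z Hz Vz. apply (H z Hz). rewrite E; auto.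
Qed.

Lemma phi2_Q : ~ Log_gt1 dist_Q phi2.
Proof.
  intros Hv.
  set (q0 := exist is_rational (IZR 0) (rat_IZR 0)).
  specialize (Hv VQ q0). unfold phi2 in Hv. cbn [sat] in Hv.
  assert (I0 : ~ is_rational aa) by (replace aa with (aa + IZR 0 / 2) by (simpl; field); apply irr_k).
  assert (I1 : ~ is_rational (aa + 1)) by (replace (aa + 1) with (aa + IZR 2 / 2) by (simpl; field); apply irr_k).
  assert (I2 : ~ is_rational (aa + 1 + 1)) by (replace (aa + 1 + 1) with (aa + IZR 4 / 2) by (simpl; field); apply irr_k).
  assert (Ih : ~ is_rational (aa + 1/2)) by (replace (aa + 1/2) with (aa + IZR 1 / 2) by (simpl; field); apply irr_k).
  assert (Ih1 : ~ is_rational (aa + 1/2 + 1)) by (replace (aa + 1/2 + 1) with (aa + IZR 3 / 2) by (simpl; field); apply irr_k).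
  destruct (HLsat 0 aa I0 I1) as [A1 A2]. { intros q; simpl; tauto. }
  destruct (HLsat 1 (aa+1) I1 I2) as [A3 A4]. { intros q; simpl. split; intros; lra. }
  destruct (HLsat 2 (aa+1/2) Ih Ih1) as [A5 A6]. { intros q; simpl. split; intros; lra. }
  apply Hv; try (apply sat_Uf_intro; assumption).
  - apply sat_Uf_intro. intros y. cbn [sat Neg]. rewrite sat_And. cbn [sat]. unfold VQ. simpl. intros [? ?]. lra.
  - apply sat_Uf_intro. intros y. cbn [sat Neg]. unfold VQ; simpl. intros Hm Hl.
    assert (proj1_sig y <> aa + 1).
    { intro E. apply I1. rewrite <- E. apply proj2_sig. }
    destruct (Rlt_or_le (proj1_sig y) (aa + 1)).
    + exfalso. apply Hl. lra.
    + lra.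
  - apply sat_Ef_intro; [exact joint_Q|].
    destruct (rat_dense (aa + 1/2) (aa + 1)) as [t [Ht1 Ht2]]; [lra|].
    exists (exist _ t Ht1). rewrite sat_And. cbn [sat]. unfold VQ; simpl. lra.
  - apply sat_Ef_intro; [exact joint_Q|].
    destruct (rat_dense (aa + 1) (aa + 3/2)) as [t [Ht1 Ht2]]; [lra|].
    exists (exist _ t Ht1). rewrite sat_And. cbn [sat]. unfold VQ; simpl. lra.
Qed.

Definition qenum (n : nat) : R :=
  let (a, r1) := Cantor.of_nat n in
  let (b, c) := Cantor.of_nat r1 in
  (INR a - INR b) / INR (S c).

Lemma qenum_rat n : is_rational (qenum n).
Proof.
  unfold qenum. destruct (Cantor.of_nat n) as [a r1]. destruct (Cantor.of_nat r1) as [b c].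
  exists (Z.of_nat a - Z.of_nat b)%Z, (Z.of_nat (S c)). split; [lia|].
  rewrite minus_IZR, <- !INR_IZR_INZ. reflexivity.
Qed.

Lemma qenum_surj x : is_rational x -> exists n, qenum n = x.
Proof.
  intros [p [q [Hq ->]]].
  assert (exists p' q', (0 < q')%Z /\ IZR p / IZR q = IZR p' / IZR q') as [p' [q' [Hq' E]]].
  { destruct (Z_lt_le_dec 0 q).
    - exists p, q; auto.
    - exists (-p)%Z, (-q)%Z. split; [lia|]. rewrite !opp_IZR. field.
      apply not_0_IZR; lia. }
  rewrite E.
  exists (Cantor.to_nat (Z.to_nat p', Cantor.to_nat (Z.to_nat (-p'), pred (Z.to_nat q')))).
  unfold qenum. rewrite !Cantor.cancel_of_to.
  rewrite !INR_IZR_INZ. f_equal.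
  - rewrite <- minus_IZR. f_equal. lia.
  - f_equal. lia.
Qed.

Definition Mono (L : list (R*R)) := forall p p', In p L -> In p' L -> (fst p < fst p' <-> snd p < snd p').
Definition Inv (L : list (R*R)) := Mono L /\ In (0,0) L /\ In (1,1) L /\
  forall p, In p L -> is_rational (fst p) /\ 0 <= fst p <= 1 /\ 0 <= snd p <= 1.

Lemma gap_gen (key val : R*R -> R) (x : R) : forall L lo0 hi0, lo0 < hi0 ->
  (forall p, In p L -> key p < x -> val p < hi0) ->
  (forall p, In p L -> x < key p -> lo0 < val p) ->
  (forall p p', In p L -> In p' L -> key p < x -> x < key p' -> val p < val p') ->
  exists lo hi, lo0 <= lo /\ lo < hi /\ hi <= hi0 /\
    forall p, In p L -> (key p < x -> val p <= lo) /\ (x < key p -> hi <= val p).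
Proof.
  induction L as [|a L IH]; intros lo0 hi0 H0 H1 H2 H3.
  - exists lo0, hi0. split; [lra|split; [lra|split; [lra|]]]. intros q Hq; destruct Hq.
  - destruct (Rlt_dec (key a) x) as [Ha|Ha].
    + destruct (IH (Rmax lo0 (val a)) hi0) as [lo [hi [B1 [B2 [B3 B4]]]]].
      * apply Rmax_lub_lt; auto. apply H1; simpl; auto.
      * intros; apply H1; simpl; auto.
      * intros p Hp Hx. apply Rmax_lub_lt. apply H2; simpl; auto. apply H3; simpl; auto.
      * intros; apply H3; simpl; auto.
      * exists lo, hi. pose proof (Rmax_l lo0 (val a)). pose proof (Rmax_r lo0 (val a)).
        split; [lra|split; [lra|split; [lra|]]]. intros p [<-|Hp].
        -- split; intros; lra.
        -- apply B4; auto.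
    + destruct (Rlt_dec x (key a)) as [Ha'|Ha'].
      * destruct (IH lo0 (Rmin hi0 (val a))) as [lo [hi [B1 [B2 [B3 B4]]]]].
        -- apply Rmin_glb_lt; auto. apply H2; simpl; auto.
        -- intros p Hp Hx. apply Rmin_glb_lt. apply H1; simpl; auto. apply H3; simpl; auto.
        -- intros; apply H2; simpl; auto.
        -- intros; apply H3; simpl; auto.
        -- exists lo, hi. pose proof (Rmin_l hi0 (val a)). pose proof (Rmin_r hi0 (val a)).
           split; [lra|split; [lra|split; [lra|]]]. intros p [<-|Hp].
           ++ split; intros; lra.
           ++ apply B4; auto.
      * destruct (IH lo0 hi0) as [lo [hi [B1 [B2 [B3 B4]]]]]; auto.
        -- intros; apply H1; simpl; auto.
        -- intros; apply H2; simpl; auto.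
        -- intros; apply H3; simpl; auto.
        -- exists lo, hi. split; [lra|split; [lra|split; [lra|]]]. intros p [<-|Hp].
           ++ split; intros; lra.
           ++ apply B4; auto.
Qed.

Definition Pdom (x : R) (L : list (R*R)) (y : R) :=
  0 < y < 1 /\ forall p, In p L -> (fst p < x -> snd p < y) /\ (x < fst p -> y < snd p).
Definition Prng (y : R) (L : list (R*R)) (x : R) :=
  is_rational x /\ 0 < x < 1 /\ forall p, In p L -> (snd p < y -> fst p < x) /\ (y < snd p -> x < fst p).

Lemma dom_ex L x : Inv L -> 0 < x < 1 -> (forall p, In p L -> fst p <> x) -> exists y, Pdom x L y.
Proof.
  intros [M [I0 [I1 R]]] Hx Hn.
  destruct (gap_gen fst snd x L (-1) 2) as [lo [hi [B1 [B2 [B3 B4]]]]].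
  - lra.
  - intros p Hp _. destruct (R p Hp) as [_ [_ ?]]. lra.
  - intros p Hp _. destruct (R p Hp) as [_ [_ ?]]. lra.
  - intros p p' Hp Hp' A B. apply (M p p' Hp Hp'). lra.
  - exists ((lo + hi) / 2). split.
    + destruct (B4 _ I0) as [A _]. destruct (B4 _ I1) as [_ B]. simpl in *.
      specialize (A (proj1 Hx)). specialize (B (proj2 Hx)). lra.
    + intros p Hp. destruct (B4 p Hp). split; intros; [apply H in H1|apply H0 in H1]; lra.
Qed.

Lemma rng_ex L y : Inv L -> 0 < y < 1 -> (forall p, In p L -> snd p <> y) -> exists x, Prng y L x.
Proof.
  intros [M [I0 [I1 R]]] Hy Hn.
  destruct (gap_gen snd fst y L (-1) 2) as [lo [hi [B1 [B2 [B3 B4]]]]].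
  - lra.
  - intros p Hp _. destruct (R p Hp) as [_ [? _]]. lra.
  - intros p Hp _. destruct (R p Hp) as [_ [? _]]. lra.
  - intros p p' Hp Hp' A B. apply (M p p' Hp Hp'). lra.
  - destruct (rat_dense lo hi B2) as [t [Ht1 Ht2]].
    exists t. split; auto. split.
    + destruct (B4 _ I0) as [A _]. destruct (B4 _ I1) as [_ B]. simpl in *.
      specialize (A (proj1 Hy)). specialize (B (proj2 Hy)). lra.
    + intros p Hp. destruct (B4 p Hp). split; intros; [apply H in H1|apply H0 in H1]; lra.
Qed.

Definition add_dom (x : R) (L : list (R*R)) : list (R*R) :=
  if excluded_middle_informative (is_rational x /\ 0 < x < 1 /\ forall p, In p L -> fst p <> x)
  then (x, epsilon (inhabits 0) (Pdom x L)) :: L else L.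
Definition add_rng (y : R) (L : list (R*R)) : list (R*R) :=
  if excluded_middle_informative (0 < y < 1 /\ forall p, In p L -> snd p <> y)
  then (epsilon (inhabits 0) (Prng y L), y) :: L else L.

Lemma mono_cons L a b : Mono L ->
  (forall p, In p L -> (fst p < a <-> snd p < b) /\ (a < fst p <-> b < snd p)) ->
  Mono ((a,b) :: L).
Proof.
  intros M H p p' [<-|Hp] [<-|Hp']; simpl.
  - split; intros; lra.
  - apply H; auto.
  - apply H; auto.
  - apply M; auto.
Qed.

Lemma add_dom_inv L x : Inv L -> Inv (add_dom x L).
Proof.
  intros HI. unfold add_dom. destruct excluded_middle_informative as [[Hr [Hx Hn]]|]; auto.
  pose proof (epsilon_spec (inhabits 0) (Pdom x L) (dom_ex L x HI Hx Hn)) as [Hy Hs].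
  set (y := epsilon (inhabits 0) (Pdom x L)) in *.
  destruct HI as [M [I0 [I1 R]]]. split; [|split; [|split]].
  - apply mono_cons; auto. intros p Hp. destruct (Hs p Hp) as [A B].
    pose proof (Hn p Hp). split; split; intros; auto.
    + destruct (Rlt_dec x (fst p)) as [r|r]. apply B in r. lra. lra.
    + destruct (Rlt_dec (fst p) x) as [r|r]. apply A in r. lra. lra.
  - simpl; auto.
  - simpl; auto.
  - intros p [<-|Hp]; simpl; auto. repeat split; auto; lra.
Qed.

Lemma add_rng_inv L y : Inv L -> Inv (add_rng y L).
Proof.
  intros HI. unfold add_rng. destruct excluded_middle_informative as [[Hy Hn]|]; auto.
  pose proof (epsilon_spec (inhabits 0) (Prng y L) (rng_ex L y HI Hy Hn)) as [Hr [Hx Hs]].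
  set (x := epsilon (inhabits 0) (Prng y L)) in *.
  destruct HI as [M [I0 [I1 R]]]. split; [|split; [|split]].
  - apply mono_cons; auto. intros p Hp. destruct (Hs p Hp) as [A B].
    pose proof (Hn p Hp). split; split; intros; auto.
    + destruct (Rlt_dec y (snd p)) as [r|r]. apply B in r. lra. lra.
    + destruct (Rlt_dec (snd p) y) as [r|r]. apply A in r. lra. lra.
  - simpl; auto.
  - simpl; auto.
  - intros p [<-|Hp]; simpl; auto. repeat split; auto; lra.
Qed.

Lemma add_dom_incl L x : incl L (add_dom x L).
Proof. unfold add_dom. destruct excluded_middle_informative; auto using incl_refl, incl_tl. Qed.
Lemma add_rng_incl L y : incl L (add_rng y L).
Proof. unfold add_rng. destruct excluded_middle_informative; auto using incl_refl, incl_tl. Qed.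

Fixpoint st (c : nat -> R) (n : nat) : list (R*R) :=
  match n with
  | O => (0,0) :: (1,1) :: nil
  | S k => add_rng (c k) (add_dom (qenum k) (st c k))
  end.

Lemma st_inv c n : Inv (st c n).
Proof.
  induction n; simpl.
  - split; [|split; [|split]].
    + intros p p' [<-|[<-|[]]] [<-|[<-|[]]]; simpl; split; intros; lra.
    + simpl; auto.
    + simpl; auto.
    + intros p [<-|[<-|[]]]; simpl; (split; [apply (rat_IZR 0) || apply (rat_IZR 1)|lra]).
  - apply add_rng_inv, add_dom_inv; auto.
Qed.

Lemma st_incl c n m : (n <= m)%nat -> incl (st c n) (st c m).
Proof.
  induction 1; [apply incl_refl|]. simpl. eapply incl_tran; [exact IHle|].
  eapply incl_tran; [apply add_dom_incl|apply add_rng_incl].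
Qed.

Lemma st_dom c k : 0 < qenum k < 1 -> exists b, In (qenum k, b) (st c (S k)).
Proof.
  intros H. simpl. 
  assert (exists b, In (qenum k, b) (add_dom (qenum k) (st c k))) as [b Hb].
  { unfold add_dom. destruct excluded_middle_informative as [_|Hn].
    - eexists; left; reflexivity.
    - apply NNPP; intro Hno. apply Hn. split; [apply qenum_rat|split; auto].
      intros [a b] Hp E. simpl in E. subst. apply Hno. exists b; auto. }
  exists b. apply add_rng_incl; auto.
Qed.

Lemma st_rng c k : 0 < c k < 1 -> exists a, In (a, c k) (st c (S k)).
Proof.
  intros H. simpl. unfold add_rng. destruct excluded_middle_informative as [_|Hn].
  - eexists; left; reflexivity.
  - apply NNPP; intro Hno. apply Hn. split; auto.
    intros [a b] Hp E. simpl in E. subst. apply Hno. exists a; auto.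
Qed.

Definition Gr (c : nat -> R) (q b : R) := exists n, In (q, b) (st c n).

Lemma Gr_common c q b q' b' : Gr c q b -> Gr c q' b' -> exists n, In (q,b) (st c n) /\ In (q',b') (st c n).
Proof.
  intros [n Hn] [m Hm]. exists (max n m). split.
  - apply (st_incl c n); [lia|auto].
  - apply (st_incl c m); [lia|auto].
Qed.

Lemma Gr_mono c q b q' b' : Gr c q b -> Gr c q' b' -> (q < q' <-> b < b').
Proof.
  intros H H'. destruct (Gr_common c q b q' b' H H') as [n [A B]].
  destruct (st_inv c n) as [M _]. apply (M _ _ A B).
Qed.

Lemma Gr_fun c q b b' : Gr c q b -> Gr c q b' -> b = b'.
Proof.
  intros H H'. pose proof (Gr_mono c q b q b' H H'). pose proof (Gr_mono c q b' q b H' H).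
  destruct (Rtotal_order b b') as [|[|]]; auto.
  - apply H0 in H2. lra.
  - apply H1 in H2. lra.
Qed.

Lemma Gr_range c q b : Gr c q b -> is_rational q /\ 0 <= q <= 1 /\ 0 <= b <= 1.
Proof. intros [n Hn]. destruct (st_inv c n) as [_ [_ [_ R]]]. apply (R _ Hn). Qed.

Lemma Gr_total c q : is_rational q -> 0 <= q <= 1 -> exists b, Gr c q b.
Proof.
  intros Hr Hq. destruct (Req_dec q 0) as [->|H0].
  { exists 0, O. simpl; auto. }
  destruct (Req_dec q 1) as [->|H1].
  { exists 1, O. simpl; auto. }
  destruct (qenum_surj q Hr) as [k <-].
  destruct (st_dom c k) as [b Hb]; [lra|]. exists b, (S k); auto.
Qed.

Lemma BF (c : nat -> R) : exists h0 : R -> R, h0 0 = 0 /\ (forall q, is_rational q -> 0 <= q < 1 -> 0 <= h0 q < 1) /\ (forall q q', is_rational q -> is_rational q' -> 0 <= q -> q' < 1 -> q < q' -> h0 q < h0 q') /\ (forall k, 0 < c k < 1 -> exists q, is_rational q /\ 0 < q < 1 /\ h0 q = c k).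
Proof.
  exists (fun q => epsilon (inhabits 0) (Gr c q)).
  assert (HS : forall q, is_rational q -> 0 <= q <= 1 -> Gr c q (epsilon (inhabits 0) (Gr c q))).
  { intros q Hr Hq. apply epsilon_spec. apply Gr_total; auto. }
  assert (G00 : Gr c 0 0) by (exists O; simpl; auto).
  assert (G11 : Gr c 1 1) by (exists O; simpl; auto).
  split; [|split; [|split]].
  - apply (Gr_fun c 0); auto. apply HS; [apply (rat_IZR 0)|lra].
  - intros q Hr Hq. pose proof (HS q Hr ltac:(lra)) as Hs.
    destruct (Gr_range _ _ _ Hs) as [_ [_ ?]]. split; [lra|].
    apply (Gr_mono c q _ 1 1 Hs G11). lra.
  - intros q q' Hr Hr' H0 H1 Hlt. apply (Gr_mono c q _ q' _ (HS q Hr ltac:(lra)) (HS q' Hr' ltac:(lra))); auto.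
  - intros k Hk. destruct (st_rng c k Hk) as [a Ha].
    assert (Ga : Gr c a (c k)) by (exists (S k); auto).
    destruct (Gr_range _ _ _ Ga) as [Hr [Hq _]].
    exists a. split; auto. split.
    + split.
      * apply (Gr_mono c 0 0 a (c k) G00 Ga). lra.
      * apply (Gr_mono c a (c k) 1 1 Ga G11). lra.
    + apply (Gr_fun c a); auto.
Qed.

Lemma floor_spec x : IZR (Int_part x) <= x < IZR (Int_part x) + 1.
Proof. destruct (base_Int_part x). lra. Qed.

Lemma floor_unique n x : IZR n <= x < IZR n + 1 -> Int_part x = n.
Proof.
  intros H. unfold Int_part. rewrite <- (tech_up x (n + 1)).
  - lia.
  - rewrite plus_IZR. lra.
  - rewrite plus_IZR. lra.
Qed.

Lemma IZR_succ_le n m : IZR n < IZR m -> IZR n + 1 <= IZR m.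
Proof.
  intros H. apply lt_IZR in H. assert (H1 : (n + 1 <= m)%Z) by lia.
  apply IZR_le in H1. rewrite plus_IZR in H1. exact H1.
Qed.

Definition hmap (h0 : R -> R) (x : R) : R := IZR (Int_part x) + h0 (x - IZR (Int_part x)).

Lemma hmap_int h0 n f : 0 <= f < 1 -> hmap h0 (IZR n + f) = IZR n + h0 f.
Proof.
  intros Hf. unfold hmap. rewrite (floor_unique n) by lra. f_equal. f_equal. ring.
Qed.

Lemma hmap_shift h0 x : hmap h0 (x + 1) = hmap h0 x + 1.
Proof.
  pose proof (floor_spec x). set (n := Int_part x) in *.
  replace (x + 1) with (IZR (n + 1) + (x - IZR n)) by (rewrite plus_IZR; ring).
  rewrite hmap_int by lra. unfold hmap. fold n. rewrite plus_IZR. ring.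
Qed.

Lemma hmap_mono h0 :
  (forall q, is_rational q -> 0 <= q < 1 -> 0 <= h0 q < 1) ->
  (forall q q', is_rational q -> is_rational q' -> 0 <= q -> q' < 1 -> q < q' -> h0 q < h0 q') ->
  forall q q', is_rational q -> is_rational q' -> q < q' -> hmap h0 q < hmap h0 q'.
Proof.
  intros Hb Hc q q' Hr Hr' Hlt.
  pose proof (floor_spec q) as Fq. pose proof (floor_spec q') as Fq'.
  unfold hmap. set (n := Int_part q) in *. set (n' := Int_part q') in *.
  assert (Rf : is_rational (q - IZR n)) by (apply rat_sub; auto; apply rat_IZR).
  assert (Rf' : is_rational (q' - IZR n')) by (apply rat_sub; auto; apply rat_IZR).
  pose proof (Hb _ Rf ltac:(lra)). pose proof (Hb _ Rf' ltac:(lra)).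
  destruct (Rtotal_order (IZR n) (IZR n')) as [Hn|[Hn|Hn]].
  - apply IZR_succ_le in Hn. lra.
  - rewrite <- Hn in *. apply Rplus_lt_compat_l. apply Hc; auto; lra.
  - apply IZR_succ_le in Hn. lra.
Qed.

Fixpoint subs (f : form) : list form :=
  f :: match f with
       | Imp a b => subs a ++ subs b
       | Dia a => subs a
       | _ => nil
       end.

Lemma subs_closed f : forall g, In g (subs f) -> incl (subs g) (subs f).
Proof.
  induction f; simpl; intros g H.
  - destruct H as [<-|[]]. apply incl_refl.
  - destruct H as [<-|[]]. apply incl_refl.
  - destruct H as [<-|H]; [apply incl_refl|].
    apply in_app_or in H. destruct H as [H|H].
    + intros x Hx. right. apply in_or_app. left. apply (IHf1 g H x Hx).
    + intros x Hx. right. apply in_or_app. right. apply (IHf2 g H x Hx).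
  - destruct H as [<-|H]; [apply incl_refl|].
    intros x Hx. right. apply (IHf g H x Hx).
Qed.

Lemma subs_imp f a b : In (Imp a b) (subs f) -> In a (subs f) /\ In b (subs f).
Proof.
  intros H. pose proof (subs_closed f _ H) as I. split; apply I; simpl; right; apply in_or_app.
  - left. destruct a; simpl; auto.
  - right. destruct b; simpl; auto.
Qed.

Lemma subs_dia f a : In (Dia a) (subs f) -> In a (subs f).
Proof.
  intros H. pose proof (subs_closed f _ H) as I. apply I. simpl. right. destruct a; simpl; auto.
Qed.

Definition wit (P : R -> Prop) (t : R) (b : bool) : R :=
  epsilon (inhabits 0) (fun y => P y /\ (if b then t < y else y < t)).

Definition Tenum (V : nat -> R -> Prop) (phi : form) (x0 : R) (n : nat) : R :=
  let (i, j) := Cantor.of_nat n in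
  match i with
  | O => x0
  | S k => let (m, bb) := Cantor.of_nat j in
           wit (fun y => sat (R_gt1 dist_R) V y (nth k (subs phi) Bot)) (qenum m) (Nat.eqb bb 0)
  end.

Lemma part1 phi : Log_gt1 dist_Q phi -> Log_gt1 dist_R phi.
Proof.
  intros HQ V x0.
  set (T := Tenum V phi x0).
  set (c := fun n => T n - IZR (Int_part (T n))).
  destruct (BF c) as [h0 [Ha [Hb [Hc Hd]]]].
  set (h := hmap h0).
  assert (Hmono : forall q q', is_rational q -> is_rational q' -> q < q' -> h q < h q')
    by (apply hmap_mono; auto).
  assert (Hmono' : forall q q', is_rational q -> is_rational q' -> q <= q' -> h q <= h q').
  { intros q q' Hr Hr' Hle. destruct Hle as [Hl| ->]; [left; auto|right; auto]. }
  assert (Hsh : forall q, h (q + 1) = h q + 1) by (intros; apply hmap_shift).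
  assert (Himg : forall n, exists q, is_rational q /\ h q = T n).
  { intros n. pose proof (floor_spec (T n)) as Fl.
    destruct (Req_dec (c n) 0) as [E|E].
    - exists (IZR (Int_part (T n))). split; [apply rat_IZR|].
      unfold h. replace (IZR (Int_part (T n))) with (IZR (Int_part (T n)) + 0) at 1 by ring.
      rewrite hmap_int by lra. rewrite Ha. unfold c in E. lra.
    - destruct (Hd n) as [q [Hr [Hq Eq]]].
      { assert (H0 : 0 <= c n) by (unfold c; lra). split.
        - destruct (Rle_lt_or_eq_dec _ _ H0) as [H'|H']; [exact H'|exfalso; apply E; auto].
        - unfold c; lra. }
      exists (IZR (Int_part (T n)) + q). split; [apply rat_add; auto; apply rat_IZR|].
      unfold h. rewrite hmap_int by lra. rewrite Eq. unfold c. ring. }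
  set (V' := fun k (q : QR) => V k (h (proj1_sig q))).
  assert (Truth : forall psi, In psi (subs phi) -> forall q : QR,
            sat (R_gt1 dist_Q) V' q psi <-> sat (R_gt1 dist_R) V (h (proj1_sig q)) psi).
  { induction psi; intros Hin q; simpl.
    - tauto.
    - tauto.
    - destruct (subs_imp _ _ _ Hin). rewrite IHpsi1, IHpsi2 by auto. tauto.
    - pose proof (subs_dia _ _ Hin) as Hin'. split.
      + intros [z [Hz Sz]]. exists (h (proj1_sig z)). split.
        * unfold R_gt1, dist_Q, dist_R in *. destruct q as [q Hq], z as [z Hzr]. simpl in *.
          unfold Rabs in Hz |- *. destruct (Rcase_abs (q - z)).
          -- assert (h (q + 1) < h z) by (apply Hmono; auto; [apply rat_add; auto; apply (rat_IZR 1)|lra]).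
             rewrite Hsh in H. destruct (Rcase_abs (h q - h z)); lra.
          -- assert (h (z + 1) < h q) by (apply Hmono; auto; [apply rat_add; auto; apply (rat_IZR 1)|lra]).
             rewrite Hsh in H. destruct (Rcase_abs (h q - h z)); lra.
        * apply IHpsi; auto.
      + intros [y [Hy Sy]]. destruct q as [q Hq]. simpl in *. unfold R_gt1, dist_R in Hy.
        destruct (In_nth _ _ Bot Hin') as [k [_ Hk]].
        set (P := fun y => sat (R_gt1 dist_R) V y (nth k (subs phi) Bot)).
        assert (Hq1 : is_rational (q + 1)) by (apply rat_add; auto; apply (rat_IZR 1)).
        assert (Hqm : is_rational (q - 1)) by (apply rat_sub; auto; apply (rat_IZR 1)).
        unfold Rabs in Hy. destruct (Rcase_abs (h q - y)) as [Hs|Hs].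
        * destruct (rat_dense (h q + 1) y) as [t [Ht1 Ht2]]; [lra|].
          destruct (qenum_surj t Ht1) as [m Hm].
          set (n := Cantor.to_nat (S k, Cantor.to_nat (m, O))).
          assert (Tn : T n = wit P t true).
          { unfold T, Tenum, n. rewrite !Cantor.cancel_of_to. rewrite Hm. reflexivity. }
          assert (Wn : P (T n) /\ t < T n).
          { rewrite Tn. unfold wit. apply (epsilon_spec (inhabits 0) (fun y => P y /\ (if true then t < y else y < t))).
            exists y. split; [unfold P; rewrite Hk; auto|lra]. }
          destruct (Himg n) as [q' [Hr' Eq']].
          exists (exist _ q' Hr'). split.
          -- unfold R_gt1, dist_Q. simpl.
             destruct (Rle_or_lt q' (q + 1)) as [Hle|Hlt].
             ++ exfalso. pose proof (Hmono' q' (q+1) Hr' Hq1 Hle). rewrite Hsh in H. lra.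
             ++ unfold Rabs. destruct (Rcase_abs (q - q')); lra.
          -- apply IHpsi; auto. simpl. rewrite Eq'. unfold P in Wn. rewrite Hk in Wn. tauto.
        * destruct (rat_dense y (h q - 1)) as [t [Ht1 Ht2]]; [lra|].
          destruct (qenum_surj t Ht1) as [m Hm].
          set (n := Cantor.to_nat (S k, Cantor.to_nat (m, 1%nat))).
          assert (Tn : T n = wit P t false).
          { unfold T, Tenum, n. rewrite !Cantor.cancel_of_to. rewrite Hm. reflexivity. }
          assert (Wn : P (T n) /\ T n < t).
          { rewrite Tn. unfold wit. apply (epsilon_spec (inhabits 0) (fun y => P y /\ (if false then t < y else y < t))).
            exists y. split; [unfold P; rewrite Hk; auto|lra]. }
          destruct (Himg n) as [q' [Hr' Eq']].
          exists (exist _ q' Hr'). split.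
          -- unfold R_gt1, dist_Q. simpl.
             destruct (Rle_or_lt (q - 1) q') as [Hle|Hlt].
             ++ exfalso. pose proof (Hmono' (q-1) q' Hqm Hr' Hle).
                replace (h (q - 1)) with (h (q - 1 + 1) - 1) in H by (rewrite Hsh; ring).
                replace (q - 1 + 1) with q in H by ring. lra.
             ++ unfold Rabs. destruct (Rcase_abs (q - q')); lra.
          -- apply IHpsi; auto. simpl. rewrite Eq'. unfold P in Wn. rewrite Hk in Wn. tauto. }
  set (n0 := Cantor.to_nat (O, O)).
  assert (T0 : T n0 = x0) by (unfold T, Tenum, n0; rewrite Cantor.cancel_of_to; reflexivity).
  destruct (Himg n0) as [q0 [Hr0 E0]].
  rewrite <- T0, <- E0.
  assert (Hphi : In phi (subs phi)) by (destruct phi; simpl; auto).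
  apply (Truth phi Hphi (exist _ q0 Hr0)).
  apply HQ.
Qed.

Theorem theorem4p8 :
  (forall phi : form, Log_gt1 dist_Q phi -> Log_gt1 dist_R phi) /\
  (exists phi : form, Log_gt1 dist_R phi /\ ~ Log_gt1 dist_Q phi).
Proof.
  split.
  - exact part1.
  - exists phi2. split; [exact phi2_R|exact phi2_Q].
Qed.

Print Assumptions theorem4p8.
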